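(* Let $\mathcal{H}_{A_1},\mathcal{H}_{A_2},\mathcal{H}_{B_1},\mathcal{H}_{B_2}$ be finite-dimensional Hilbert spaces with fixed reference bases of $\mathcal{H}_{A_1}$ and $\mathcal{H}_{A_2}$ (and the product basis on $\mathcal{H}_{A_1}\otimes\mathcal{H}_{A_2}$). For all states $\rho_{A_1B_1}$ and $\rho_{A_2B_2}$, $$C^{A_1A_2|B_1B_2}_f(\rho_{A_1B_1}\otimes\rho_{A_2B_2})=C^{A_1|B_1}_f(\rho_{A_1B_1})+C^{A_2|B_2}_f(\rho_{A_2B_2}).$$
   Context: $S$ is the von Neumann entropy. For a split $X|Y$ where $X$ has reference basis $\{|k\rangle_X\}$, $\Delta_X(\rho)=\sum_k(|k\rangle\langle k|_X\otimes I_Y)\rho(|k\rangle\langle k|_X\otimes I_Y)$, and the IQ coherence of formation is $C^{X|Y}_f(\rho_{XY})=\min\sum_ip_iS(\Delta_X(|\psi_i\rangle\langle\psi_i|_{XY}))$ over all pure-state decompositions $\rho_{XY}=\sum_ip_i|\psi_i\rangle\langle\psi_i|_{XY}$. *)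

(* Defs.v *)
From HB Require Import structures.
From mathcomp Require Import all_boot all_order all_algebra.
From mathcomp Require Import complex.
From mathcomp Require Import boolp classical_sets reals exp.
Set Implicit Arguments. Unset Strict Implicit. Unset Printing Implicit Defensive.
Import Order.TTheory GRing.Theory Num.Theory.
Local Open Scope ring_scope.

Section QDefs.
Variable R : realType.
Local Notation C := R[i].

(* An operator on the Hilbert space C^T, written in the (reference) basis
   {|t>, t : T}, as its matrix entries  A x y = <x|A|y>. *)
Definition op (T : finType) := T -> T -> C.

Definition op_mx (T : finType) (A : op T) : 'M[C]_#|T| :=
  \matrix_(i, j) A (enum_val i) (enum_val j).

Definition spectrum (T : finType) (A : op T) : seq C :=
  projT1 (closed_field_poly_normal (char_poly (op_mx A))).

(* von Neumann entropy S(rho) = - sum_k l_k ln l_k over the eigenvalues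
   (ln 0 = 0 in mathcomp-analysis, so 0 ln 0 = 0). *)
Definition vN_entropy (T : finType) (A : op T) : R :=
  - \sum_(l <- spectrum A) complex.Re l * ln (complex.Re l).

Definition trace_op (T : finType) (A : op T) : C := \sum_x A x x.

Definition psd_op (T : finType) (A : op T) : Prop :=
  (forall x y, A x y = (A y x)^*) /\
  (forall v : T -> C, 0 <= \sum_x \sum_y (v x)^* * A x y * v y).

Definition is_state (T : finType) (rho : op T) : Prop :=
  psd_op rho /\ trace_op rho = 1.

Definition unit_vector (T : finType) (psi : T -> C) : Prop :=
  \sum_x psi x * (psi x)^* = 1.

Definition proj_op (T : finType) (psi : T -> C) : op T :=
  fun x y => psi x * (psi y)^*.

(* Dephasing in the reference basis of the first factor of X|Y:
   Delta_X(rho) = sum_k (|k><k|_X (x) I_Y) rho (|k><k|_X (x) I_Y). *)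
Definition dephase (X Y : finType) (rho : op (X * Y)%type) : op (X * Y)%type :=
  fun u v => if u.1 == v.1 then rho u v else 0.

Definition pure_decomp (T : finType) (rho : op T) (n : nat)
    (p : 'I_n -> R) (psi : 'I_n -> T -> C) : Prop :=
  (forall i, 0 <= p i) /\ \sum_i p i = 1 /\ (forall i, unit_vector (psi i)) /\
  (forall x y, rho x y = \sum_i (Complex (p i) 0) * proj_op (psi i) x y).

Definition coh_form_values (X Y : finType) (rho : op (X * Y)%type) : set R :=
  [set c | exists n (p : 'I_n -> R) (psi : 'I_n -> (X * Y)%type -> C),
      pure_decomp rho p psi /\
      c = \sum_i p i * vN_entropy (dephase (proj_op (psi i)))].

(* IQ coherence of formation C_f^{X|Y}; the minimum is attained, so it
   equals the infimum. *)
Definition coh_form (X Y : finType) (rho : op (X * Y)%type) : R :=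
  inf (coh_form_values rho).

(* rho_{A1B1} (x) rho_{A2B2}, regarded as an operator on
   (A1 A2) | (B1 B2) (i.e. with the factors regrouped). *)
Definition tens_regroup (A1 B1 A2 B2 : finType)
    (r1 : op (A1 * B1)%type) (r2 : op (A2 * B2)%type)
  : op ((A1 * A2) * (B1 * B2))%type :=
  fun u v => r1 (u.1.1, u.2.1) (v.1.1, v.2.1) * r2 (u.1.2, u.2.2) (v.1.2, v.2.2).

End QDefs.

(* Main.v *)
Require Import Defs.
From HB Require Import structures.
From mathcomp Require Import all_boot all_order all_algebra.
From mathcomp Require Import complex.
From mathcomp Require Import boolp classical_sets reals exp.
From mathcomp Require Import ring lra.
Set Implicit Arguments. Unset Strict Implicit. Unset Printing Implicit Defensive.
Import Order.TTheory GRing.Theory Num.Theory.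
Local Open Scope ring_scope.

Section Syl.
Variable F : comNzRingType.
Lemma sylvester_char n m (A : 'M[F]_(n, m)) (B : 'M[F]_(m, n)) :
  'X^m * char_poly (A *m B) = 'X^n * char_poly (B *m A).
Proof.
rewrite /char_poly /char_poly_mx !map_mxM.
set a := map_mx polyC A; set b := map_mx polyC B.
pose L : 'M[{poly F}]_(n + m) := block_mx 1%:M 0 (- b) ('X%:M).
pose M : 'M[{poly F}]_(n + m) := block_mx ('X%:M) a b 1%:M.
have LM : L *m M = block_mx ('X%:M) a 0 ('X%:M - b *m a).
  rewrite mulmx_block !mul1mx !mul0mx !addr0 !mulmx1 mul_mx_scalar mul_scalar_mx.
  by rewrite scalerN addNr addrC mulNmx.
have MM : M = block_mx 1%:M a 0 1%:M *m block_mx ('X%:M - a *m b) 0 b 1%:M.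
  rewrite mulmx_block !mul1mx !mul0mx !mulmx1 !add0r.
  by rewrite /M subrK.
have := congr1 determinant LM.
rewrite det_mulmx det_ublock det_lblock det1 mul1r det_scalar.
rewrite MM det_mulmx det_ublock det_lblock !det1 !mul1r mulr1 det_scalar.
by [].
Qed.
End Syl.
Lemma prod_XsubC_perm (F : idomainType) (s t : seq F) :
  \prod_(z <- s) ('X - z%:P) = \prod_(z <- t) ('X - z%:P) -> perm_eq s t.
Proof.
elim: s t => [|a s IH] t.
  rewrite big_nil => /(congr1 (fun p : {poly F} => size p)).
  by rewrite size_prod_XsubC size_poly1; case: t.
rewrite big_cons => E.
have aint : a \in t.
  by rewrite -root_prod_XsubC -E rootM root_XsubC eqxx.
have Pt := perm_to_rem aint.
move: E; rewrite (perm_big _ Pt) big_cons => /mulfI E.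
have {}E := E (negbT (polyXsubC_eq0 a)).
rewrite (permPr Pt) perm_cons; exact: IH.
Qed.
Lemma big_enum_valT (T : finType) (V : Type) (idx : V) (op : Monoid.com_law idx) (G : T -> V) :
  \big[op/idx]_(k < #|T|) G (enum_val k) = \big[op/idx]_x G x.
Proof. by rewrite -big_enum_val. Qed.
Lemma sum_enum_valT (T : finType) (V : nmodType) (G : T -> V) :
  \sum_(k < #|T|) G (enum_val k) = \sum_x G x.
Proof. by rewrite -big_enum_val. Qed.
Lemma sum_pair (X Y : finType) (V : nmodType) (G : (X * Y)%type -> V) :
  \sum_t G t = \sum_x \sum_y G (x, y).
Proof. by rewrite pair_bigA; apply: eq_bigr => -[]. Qed.
Lemma big_enumT (T : finType) (V : Type) (idx : V) (op : Monoid.com_law idx) (G : T -> V) :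
  \big[op/idx]_(x <- enum T) G x = \big[op/idx]_x G x.
Proof. by rewrite big_enum. Qed.
Section S.
Variable R : realType.
Local Notation C := R[i].
Definition nsq (z : C) : R := complex.Re z ^+ 2 + complex.Im z ^+ 2.
Lemma conjM_nsq (z : C) : z^* * z = real_complex R (nsq z).
Proof. case: z => a b; rewrite /nsq; apply/eqP; rewrite eq_complex /=; apply/andP; split; apply/eqP; ring. Qed.

Definition qv (X Y : finType) (psi : (X * Y)%type -> C) (x : X) : R :=
  \sum_y nsq (psi (x, y)).
Definition ent (X : finType) (q : X -> R) : R := - \sum_x q x * ln (q x).

Lemma iter_mulX0 n : iter n (fun p : {poly C} => ('X - 0%:P) * p) 1 = 'X^n.
Proof. by elim: n => //= n ->; rewrite subr0 exprS. Qed.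
Lemma iter_add0 n : iter n (fun p : R => 0 + p) 0 = 0.
Proof. by elim: n => //= n ->; rewrite addr0. Qed.

Lemma vN_dephase_pure (X Y : finType) (psi : (X * Y)%type -> C) :
  vN_entropy (dephase (proj_op psi)) = ent (qv psi).
Proof.
pose U0 : 'M[C]_(#|{: X * Y}|, #|X|) :=
  \matrix_(i, k) (if (enum_val i).1 == enum_val k then psi (enum_val i) else 0).
pose Ut : 'M[C]_(#|X|, #|{: X * Y}|) := \matrix_(k, i) (U0 i k)^*.
have HM : op_mx (dephase (proj_op psi)) = U0 *m Ut.
  apply/matrixP => i j; rewrite !mxE.
  rewrite (bigD1 (enum_rank (enum_val i).1)) //= big1 ?addr0; last first.
    move=> k kn; rewrite !mxE; case: eqP => [E|]; last by rewrite mul0r.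
    by move: kn; rewrite E enum_valK eqxx.
  rewrite !mxE enum_rankK eqxx /dephase /proj_op eq_sym.
  by case: eqP => _; rewrite ?conjC0 ?mulr0.
pose w (x : X) := real_complex R (qv psi x).
have HU : Ut *m U0 = diag_mx (\row_k w (enum_val k)).
  apply/matrixP => k k'; rewrite !mxE.
  rewrite (eq_bigr (fun i => let t := enum_val i in
     (if t.1 == enum_val k then psi t else 0)^* *
     (if t.1 == enum_val k' then psi t else 0))); last by move=> i _; rewrite !mxE.
  rewrite (sum_enum_valT (fun t => (if t.1 == enum_val k then psi t else 0)^* *
     (if t.1 == enum_val k' then psi t else 0))).
  have [<-|nk] := eqVneq k k'.
    rewrite sum_pair /= (bigD1 (enum_val k)) //= [X in _ + X = _]big1 ?addr0; last first.
      by move=> x xn; apply: big1 => y _; rewrite (negbTE xn) conjC0 mul0r.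
    rewrite mulr1n /w /qv rmorph_sum; apply: eq_bigr => y _.
    by rewrite eqxx conjM_nsq.
  rewrite mulr0n; apply: big1 => t _.
  case: eqP => [->|]; last by rewrite conjC0 mul0r.
  by rewrite (inj_eq enum_val_inj) (negbTE nk) mulr0.
have HS : char_poly (op_mx (dephase (proj_op psi))) =
    \prod_(z <- spectrum (dephase (proj_op psi))) ('X - z%:P).
  rewrite /spectrum; case: closed_field_poly_normal => r /= E.
  by rewrite [LHS]E (monicP (char_poly_monic _)) scale1r.
have HP : perm_eq (nseq #|X| 0 ++ spectrum (dephase (proj_op psi)))
                  (nseq #|{: X * Y}| 0 ++ [seq w x | x <- enum X]).
  apply: prod_XsubC_perm; rewrite !big_cat /= !big_nseq !iter_mulX0 -HS HM.
  rewrite sylvester_char HU char_poly_trig ?diag_mx_is_trig // big_map big_enumT.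
  congr (_ * _); rewrite -(big_enum_valT _ (fun x => 'X - (w x)%:P)).
  by apply: eq_bigr => k _; rewrite !mxE eqxx mulr1n.
rewrite /vN_entropy /ent; congr (- _).
have -> : \sum_(l <- spectrum (dephase (proj_op psi))) complex.Re l * ln (complex.Re l) =
   \sum_(l <- nseq #|X| 0 ++ spectrum (dephase (proj_op psi))) complex.Re l * ln (complex.Re l).
  by rewrite big_cat big_nseq /= mul0r iter_add0 add0r.
rewrite (perm_big _ HP) big_cat big_nseq /= mul0r iter_add0 add0r big_map big_enumT.
by [].
Qed.
End S.

Section E.
Variable R : realType.
Local Notation C := R[i].

Lemma exists_decomp (T : finType) (rho : op R T) :
  is_state rho -> exists n p psi, @pure_decomp R T rho n p psi.
Proof.
move=> [[Hh Hpsd] Htr].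
pose M := op_mx rho.
have Mh : M \is hermsymmx.
  apply/is_hermitianmxP; rewrite expr0 scale1r; apply/matrixP => a b.
  by rewrite !mxE Hh.
have /orthomx_spectralP ME := hermitian_normalmx Mh.
have dreal := hermitian_spectral_diag_real Mh.
move: ME dreal; set P := spectralmx M; set d := spectral_diag M => ME dreal.
have Pu : P \is unitarymx := spectral_unitarymx M.
have PP : P *m map_mx Num.Def.conjC (P^T) = 1%:M by apply/unitarymxP.
rewrite invmx_unitary // in ME.
have dR k : real_complex R (complex.Re (d 0 k)) = d 0 k.
  by apply: RRe_real; move/mxOverP: dreal; apply.
have Mab a b : M a b = \sum_k (P k a)^* * d 0 k * P k b.
  rewrite ME mul_mx_diag !mxE; apply: eq_bigr => k _; rewrite !mxE.
  done.
have PM k : \sum_a P k a * (P k a)^* = 1.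
  have := congr1 (fun A : 'M_#|T| => A k k) PP; rewrite !mxE eqxx mulr1n => <-.
  by apply: eq_bigr => a _; rewrite !mxE.
have dk k : d 0 k = \sum_a \sum_b P k a * M a b * (P k b)^*.
  have : diag_mx d = P *m M *m map_mx Num.Def.conjC (P^T).
    by rewrite ME !mulmxA PP mul1mx -mulmxA PP mulmx1.
  move/(congr1 (fun A : 'M_#|T| => A k k)); rewrite !mxE eqxx mulr1n => ->.
  rewrite exchange_big; apply: eq_bigr => b _; rewrite !mxE mulr_suml.
  by apply: eq_bigr => a _; rewrite !mxE.
have dge0 k : 0 <= complex.Re (d 0 k).
  rewrite -ler0c dR dk.
  have := Hpsd (fun t => (P k (enum_rank t))^*).
  rewrite -sum_enum_valT; under eq_bigr => a _ do rewrite -sum_enum_valT.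
  congr (_ <= _); apply: eq_bigr => a _; apply: eq_bigr => b _.
  by rewrite !enum_valK conjCK /M mxE.
exists #|T|, (fun k => complex.Re (d 0 k)), (fun k t => (P k (enum_rank t))^*).
split; first by [].
split.
  apply: complexI; rewrite rmorph_sum /=.
  under eq_bigr => k _ do rewrite dR -[d 0 k]mulr1 -(PM k) mulr_sumr.
  rewrite exchange_big /= -[X in _ = X]/(1 : C) -Htr /trace_op -(sum_enum_valT (fun x => rho x x)); apply: eq_bigr => a _.
  have -> : rho (enum_val a) (enum_val a) = M a a by rewrite /M mxE.
  rewrite Mab; apply: eq_bigr => k _.
  by ring.
split.
  move=> k; rewrite /unit_vector -sum_enum_valT -(PM k).
  by apply: eq_bigr => a _; rewrite enum_valK conjCK mulrC.
move=> x y.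
rewrite -[x]enum_rankK -[y]enum_rankK.
have -> : rho (enum_val (enum_rank x)) (enum_val (enum_rank y)) = M (enum_rank x) (enum_rank y).
  by rewrite /M mxE.
rewrite Mab; apply: eq_bigr => k _.
rewrite /proj_op !enum_valK conjCK.
change (Complex (complex.Re (d 0 k)) 0) with (real_complex R (complex.Re (d 0 k))).
  by rewrite dR; ring.
Qed.
End E.

Section G.
Variable R : realType.
Local Notation C := R[i].
Definition g (x : R) := x * ln x.
Lemma g0 : g 0 = 0. Proof. by rewrite /g mul0r. Qed.
Lemma g1 : g 1 = 0. Proof. by rewrite /g ln1 mulr0. Qed.

Lemma ln_le_sub1 (y : R) : 0 < y -> ln y <= y - 1.
Proof.
move=> y0; have h : -1 < y - 1 by rewrite ltrBrDl; lra.
by have := le_ln1Dx h; rewrite addrC subrK.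
Qed.

Lemma term_ineq (v s V T : R) : 0 <= v -> v <= s -> v <= V -> 0 < T ->
  v * ln s + v * ln V - g v - v * ln T <= s * V / T - v.
Proof.
move=> v0 vs vV T0; have [->|vp] := eqVneq v 0.
  rewrite !mul0r g0 !subr0 add0r divr_ge0 ?mulr_ge0 // ?(ltW T0) //; exact: le_trans vs || exact: le_trans vV.
have vp' : 0 < v by rewrite lt_def vp.
have sp : 0 < s by exact: lt_le_trans vs.
have Vp : 0 < V by exact: lt_le_trans vV.
have yp : 0 < s * V / (v * T) by rewrite divr_gt0 // mulr_gt0.
have := ln_le_sub1 yp.
rewrite ln_div ?posrE ?mulr_gt0 // !lnM ?posrE // => h.
have := ler_wpM2l v0 h.
rewrite /g; move=> h2; apply: le_trans _ (le_trans h2 _).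
  by rewrite le_eqVlt; apply/orP; left; apply/eqP; ring.
rewrite le_eqVlt; apply/orP; left; apply/eqP; field.
by rewrite vp gt_eqF.
Qed.


Lemma cond_ineq (J K : finType) (v : J -> K -> R) (s : J -> R) (V : K -> R) (T : R) :
  (forall j k, 0 <= v j k) -> (forall j, s j = \sum_k v j k) ->
  (forall k, V k = \sum_j v j k) -> T = \sum_j s j ->
  \sum_j g (s j) + \sum_k g (V k) <= \sum_j \sum_k g (v j k) + g T.
Proof.
move=> v0 sE VE TE.
have s0 j : 0 <= s j by rewrite sE sumr_ge0.
have V0 k : 0 <= V k by rewrite VE sumr_ge0.
have vs j k : v j k <= s j.
  by rewrite sE (bigD1 k) //= lerDl sumr_ge0.
have vV j k : v j k <= V k.
  by rewrite VE (bigD1 j) //= lerDl sumr_ge0.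
have T0 : 0 <= T by rewrite TE sumr_ge0.
have [Tz|Tp] := eqVneq T 0.
  have sz j : s j = 0.
    by move: Tz; rewrite TE => /eqP; rewrite psumr_eq0 // => /allP /(_ j (mem_index_enum _)) /eqP.
  have vz j k : v j k = 0 by apply/eqP; rewrite eq_le v0 andbT -(sz j) vs.
  have Vz k : V k = 0 by rewrite VE big1.
  rewrite Tz g0 addr0 !big1 ?addr0 //; first by move=> j _; rewrite big1 // => k _; rewrite vz g0.
    by move=> k _; rewrite Vz g0.
  by move=> j _; rewrite sz g0.
have Tp' : 0 < T by rewrite lt_def Tp T0.
have H : \sum_j \sum_k (v j k * ln (s j) + v j k * ln (V k) - g (v j k) - v j k * ln T)
   <= \sum_j \sum_k (s j * V k / T - v j k).
  by apply: ler_sum => j _; apply: ler_sum => k _; apply: term_ineq.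
have SV : \sum_k V k = T.
  rewrite TE (eq_bigr _ (fun k _ => VE k)) exchange_big.
  by apply: eq_bigr => j _; rewrite sE.
have E1a : \sum_j \sum_k s j * V k / T = T.
  transitivity (\sum_j s j * (\sum_k V k) / T).
    by apply: eq_bigr => j _; rewrite mulr_sumr mulr_suml.
  rewrite SV -!mulr_suml -TE; field; done.
have E1 : \sum_j \sum_k (s j * V k / T - v j k) = 0.
  under eq_bigr => j _ do rewrite sumrB -sE.
  by rewrite sumrB E1a -TE subrr.
have E2 : \sum_j \sum_k (v j k * ln (s j) + v j k * ln (V k) - g (v j k) - v j k * ln T)
   = \sum_j g (s j) + \sum_k g (V k) - \sum_j \sum_k g (v j k) - g T.
  under eq_bigr => j _ do rewrite !sumrB big_split /= -mulr_suml -sE.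
  rewrite !sumrB big_split /= exchange_big /=.
  under [X in _ + X - _ - _ = _]eq_bigr => k _ do rewrite -mulr_suml -VE.
  under [X in _ - X = _]eq_bigr => j _ do rewrite -mulr_suml -sE.
  by rewrite -mulr_suml -TE.
move: H; rewrite E2 E1 => H; lra.
Qed.

Lemma sum_regroup (A1 A2 B1 B2 : finType) (V : nmodType)
  (F : ((A1 * A2) * (B1 * B2))%type -> V) :
  \sum_u F u = \sum_(t1 : (A1 * B1)%type) \sum_(t2 : (A2 * B2)%type) F ((t1.1, t2.1), (t1.2, t2.2)).
Proof.
rewrite (sum_pair F) (sum_pair (fun a => \sum_b F (a, b))) /=.
rewrite (sum_pair (fun t1 : (A1 * B1)%type => \sum_(t2 : (A2 * B2)%type) F ((t1.1, t2.1), (t1.2, t2.2)))) /=.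
apply: eq_bigr => a1 _.
under eq_bigr => a2 _ do rewrite (sum_pair (fun b => F ((a1, a2), b))) /=.
under [RHS]eq_bigr => b1 _ do rewrite (sum_pair (fun t2 : (A2 * B2)%type => F ((a1, t2.1), (b1, t2.2)))) /=.
by rewrite exchange_big.
Qed.

Lemma nsq_ge0 (z : C) : 0 <= nsq z.
Proof. by rewrite /nsq addr_ge0 // sqr_ge0. Qed.
Lemma nsq0 : nsq (0 : C) = 0.
Proof. by rewrite /nsq /= expr0n /= addr0. Qed.
Lemma nsq_eq0 (z : C) : nsq z = 0 -> z = 0.
Proof.
case: z => a b; rewrite /nsq /= => /eqP; rewrite paddr_eq0 ?sqr_ge0 // !sqrf_eq0.
by case/andP => /eqP -> /eqP ->.
Qed.
Lemma nsqM (z w : C) : nsq (z * w) = nsq z * nsq w.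
Proof. by case: z w => a b [c d]; rewrite /nsq /=; ring. Qed.
Lemma nsq_real (r : R) : nsq (real_complex R r) = r ^+ 2.
Proof. by rewrite /nsq /= expr0n /= addr0. Qed.
Lemma mul_conj_nsq (z : C) : z * z^* = real_complex R (nsq z).
Proof. by rewrite mulrC conjM_nsq. Qed.
Lemma real_complexM (a b : R) : real_complex R (a * b) = real_complex R a * real_complex R b.
Proof. by rewrite rmorphM. Qed.
Lemma conj_real (r : R) : (real_complex R r)^* = real_complex R r.
Proof. by apply/eqP; rewrite eq_complex /= oppr0 !eqxx. Qed.

Lemma unitE (T : finType) (psi : T -> C) :
  unit_vector psi <-> \sum_t nsq (psi t) = 1.
Proof.
rewrite /unit_vector; under eq_bigr => t _ do rewrite mul_conj_nsq.
rewrite -rmorph_sum; split => [h|->]; last by [].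
by apply: complexI; rewrite h.
Qed.

Lemma qv_sum (X Y : finType) (psi : (X * Y)%type -> C) :
  \sum_x qv psi x = \sum_t nsq (psi t).
Proof. by rewrite sum_pair. Qed.

Lemma ent_ge0 (X : finType) (q : X -> R) :
  (forall x, 0 <= q x) -> \sum_x q x = 1 -> 0 <= ent q.
Proof.
move=> q0 q1; rewrite /ent oppr_ge0; apply: sumr_le0 => x _.
have qle : q x <= 1 by rewrite -q1 (bigD1 x) //= lerDl sumr_ge0.
by rewrite mulr_ge0_le0 // ln_le0.
Qed.

Lemma g_div (x s : R) : 0 <= x -> 0 < s -> x * ln (x / s) = g x - x * ln s.
Proof.
move=> x0 s0; have [->|xn] := eqVneq x 0; first by rewrite !mul0r g0 subrr.
have xp : 0 < x by rewrite lt_def xn.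
by rewrite ln_div ?posrE // mulrBr.
Qed.

Lemma ent_scale (X : finType) (q : X -> R) (s : R) :
  (forall x, 0 <= q x) -> s = \sum_x q x -> 0 < s ->
  s * ent (fun x => q x / s) = - (\sum_x g (q x) - g s).
Proof.
move=> q0 sE s0; rewrite /ent mulrN mulr_sumr; congr (- _).
under eq_bigr => x _ do rewrite mulrA (mulrC s) mulfVK ?gt_eqF // g_div //.
by rewrite sumrB -mulr_suml -sE.
Qed.

Lemma g_mul (x y : R) : 0 <= x -> 0 <= y -> g (x * y) = g x * y + x * g y.
Proof.
move=> x0 y0; have [->|xn] := eqVneq x 0; first by rewrite !mul0r g0 mul0r add0r.
have [->|yn] := eqVneq y 0; first by rewrite !mulr0 g0 mulr0 addr0.
have xp : 0 < x by rewrite lt_def xn.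
have yp : 0 < y by rewrite lt_def yn.
rewrite /g lnM ?posrE //; ring.
Qed.

Lemma ent_prod (X1 X2 : finType) (q1 : X1 -> R) (q2 : X2 -> R) :
  (forall x, 0 <= q1 x) -> (forall x, 0 <= q2 x) ->
  \sum_x q1 x = 1 -> \sum_x q2 x = 1 ->
  ent (fun a : (X1 * X2)%type => q1 a.1 * q2 a.2) = ent q1 + ent q2.
Proof.
move=> h1 h2 s1 s2; rewrite /ent -opprD; congr (- _).
rewrite (sum_pair (fun a : (X1 * X2)%type => q1 a.1 * q2 a.2 * ln (q1 a.1 * q2 a.2))) /=.
under eq_bigr => x _ do under eq_bigr => y _ do rewrite -/(g _) g_mul //.
under eq_bigr => x _ do rewrite big_split /= -mulr_sumr -mulr_sumr s2 mulr1.
by rewrite big_split /= -mulr_suml s1 mul1r.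
Qed.
End G.

Section P.
Variable R : realType.
Local Notation C := R[i].
Local Notation rc := (real_complex R).

Definition pdI (T I : finType) (rho : op R T) (p : I -> R) (psi : I -> T -> C) : Prop :=
  (forall i, 0 <= p i) /\ \sum_i p i = 1 /\ (forall i, unit_vector (psi i)) /\
  (forall x y, rho x y = \sum_i rc (p i) * proj_op (psi i) x y).

Lemma pdI_values (X Y I : finType) (rho : op R (X * Y)%type) (p : I -> R) psi :
  pdI rho p psi -> coh_form_values rho (\sum_i p i * ent (qv (psi i))).
Proof.
move=> [p0 [p1 [pu pd]]].
exists #|I|, (fun k => p (enum_val k)), (fun k => psi (enum_val k)); split.
  split; first by move=> k; apply: p0.
  split; first by rewrite (sum_enum_valT p).
  split; first by move=> k; apply: pu.
  move=> x y; rewrite pd.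
  exact: (esym (sum_enum_valT (fun i => rc (p i) * proj_op (psi i) x y))).
rewrite -(sum_enum_valT (fun i => p i * ent (qv (psi i)))).
by apply: eq_bigr => k _; rewrite vN_dephase_pure.
Qed.

Lemma values_pd (X Y : finType) (rho : op R (X * Y)%type) c :
  coh_form_values rho c -> exists n (p : 'I_n -> R) psi,
    pdI rho p psi /\ c = \sum_i p i * ent (qv (psi i)).
Proof.
move=> [n [p [psi [pd ->]]]]; exists n, p, psi; split; first exact: pd.
by apply: eq_bigr => i _; rewrite vN_dephase_pure.
Qed.

Lemma qv_ge0 (X Y : finType) (psi : (X * Y)%type -> C) x : 0 <= qv psi x.
Proof. by rewrite /qv sumr_ge0 // => y _; apply: nsq_ge0. Qed.

Lemma ent_qv_ge0 (X Y : finType) (psi : (X * Y)%type -> C) :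
  unit_vector psi -> 0 <= ent (qv psi).
Proof.
move/unitE => h; apply: ent_ge0; first exact: qv_ge0.
by rewrite qv_sum.
Qed.

Lemma values_ge0 (X Y : finType) (rho : op R (X * Y)%type) c :
  coh_form_values rho c -> 0 <= c.
Proof.
move/values_pd => [n [p [psi [[p0 [_ [pu _]]] ->]]]].
by apply: sumr_ge0 => i _; rewrite mulr_ge0 // ent_qv_ge0.
Qed.

Definition sn (T : finType) (phi : T -> C) : R := \sum_t nsq (phi t).

Lemma sn_ge0 (T : finType) (phi : T -> C) : 0 <= sn phi.
Proof. by apply: sumr_ge0 => t _; apply: nsq_ge0. Qed.

Lemma sn_eq0 (T : finType) (phi : T -> C) : sn phi = 0 -> forall t, phi t = 0.
Proof.
move=> /eqP; rewrite psumr_eq0; last by move=> t _; apply: nsq_ge0.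
by move=> /allP h t; apply: nsq_eq0; apply/eqP; apply: h; rewrite mem_index_enum.
Qed.

Lemma mul_real_conj (a b : C) (r : R) :
  (a * rc r) * (b * rc r)^* = a * b^* * rc (r * r).
Proof. case: a b => a1 a2 [b1 b2]; apply/eqP; rewrite eq_complex /=; apply/andP; split; apply/eqP; ring. Qed.

Lemma nsq_scale (z : C) (r : R) : nsq (z * rc r) = nsq z * r ^+ 2.
Proof. by rewrite nsqM nsq_real. Qed.
End P.

Section Q.
Variable R : realType.
Local Notation C := R[i].
Local Notation rc := (real_complex R).

Lemma slice (X Y I J : finType) (rho : op R (X * Y)%type) (p : I -> R)
    (Phi : I -> J -> (X * Y)%type -> C) (e0 : (X * Y)%type) :
  (forall i, 0 <= p i) -> trace_op rho = 1 ->
  (forall x y, rho x y = \sum_i \sum_j rc (p i) * (Phi i j x * (Phi i j y)^*)) ->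
  coh_form_values rho
    (- \sum_i p i * \sum_j (\sum_x g (qv (Phi i j) x) - g (sn (Phi i j)))).
Proof.
move=> p0 tr dec.
pose s i j := sn (Phi i j).
have s0 i j : 0 <= s i j by apply: sn_ge0.
pose c i j : R := (Num.sqrt (s i j))^-1.
have cc i j : 0 < s i j -> s i j * (c i j * c i j) = 1.
  move=> sp; rewrite -expr2 /c exprVn sqr_sqrtr ?(ltW sp) // mulfV // gt_eqF //.
pose phi (ij : (I * J)%type) : (X * Y)%type -> C :=
  if 0 < s ij.1 ij.2 then fun t => Phi ij.1 ij.2 t * rc (c ij.1 ij.2)
  else fun t => if t == e0 then 1 else 0.
pose p' (ij : (I * J)%type) := p ij.1 * s ij.1 ij.2.
have tot : \sum_i \sum_j p i * s i j = 1.
  apply: complexI; rewrite -[X in _ = X]/(1 : C) -tr /trace_op (eq_bigr _ (fun x _ => dec x x)).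
  rewrite rmorph_sum /=; under eq_bigr => i _ do rewrite rmorph_sum /=.
  rewrite [RHS]exchange_big; apply: eq_bigr => i _.
  rewrite [RHS]exchange_big; apply: eq_bigr => j _.
  rewrite /s /sn mulr_sumr rmorph_sum; apply: eq_bigr => t _.
  by rewrite mul_conj_nsq rmorphM.
have H : pdI rho p' phi.
  split; first by move=> ij; rewrite /p' mulr_ge0.
  split; first by rewrite /p' -tot (sum_pair (fun ij : (I * J)%type => p ij.1 * s ij.1 ij.2)).
  split.
    move=> [i j]; apply/unitE; rewrite /phi /=; case: ifP => sp.
      under eq_bigr => t _ do rewrite nsq_scale.
      by rewrite -mulr_suml -/(sn _) -/(s i j) expr2 cc.
    rewrite (bigD1 e0) //= eqxx big1 ?addr0; first by rewrite /nsq /= expr0n /= expr1n addr0.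
    by move=> t /negbTE ->; rewrite nsq0.
  move=> x y; rewrite dec (sum_pair (fun ij : (I * J)%type => rc (p' ij) * proj_op (phi ij) x y)) /=.
  apply: eq_bigr => i _; apply: eq_bigr => j _.
  rewrite /p' /phi /proj_op /=; case: ifP => sp.
    rewrite mul_real_conj real_complexM.
    rewrite [RHS](_ : _ = rc (p i) * (Phi i j x * (Phi i j y)^*) * rc (s i j * (c i j * c i j))); last by rewrite real_complexM; ring.
    by rewrite cc // rmorph1 mulr1.
  have sz : s i j = 0 by apply/eqP; rewrite eq_le s0 andbT leNgt sp.
  have Pz := sn_eq0 sz.
  by rewrite !Pz sz mulr0 !mul0r mulr0.
have := pdI_values H; congr (coh_form_values _ _).
rewrite (sum_pair (fun ij : (I * J)%type => p' ij * ent (qv (phi ij)))) /= -sumrN.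
apply: eq_bigr => i _; rewrite mulr_sumr -sumrN; apply: eq_bigr => j _.
rewrite /p' /phi /=; case: ifP => sp.
  have qvE : qv (fun t => Phi i j t * rc (c i j)) = (fun x => qv (Phi i j) x / s i j).
    apply: funext => x; rewrite /qv mulr_suml; apply: eq_bigr => y _.
    by rewrite nsq_scale /c exprVn sqr_sqrtr // ltW.
  rewrite qvE -mulrA ent_scale //; first by rewrite mulrN.
    by move=> x; apply: qv_ge0.
  by rewrite qv_sum.
have sz : s i j = 0 by apply/eqP; rewrite eq_le s0 andbT leNgt sp.
rewrite sz mulr0 mul0r -/(s i j) sz g0 subr0 big1 ?mulr0 ?oppr0 // => x _.
have Pz := sn_eq0 sz.
by rewrite /qv big1 ?g0 // => y _; rewrite Pz nsq0.
Qed.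
End Q.

Section W.
Variable R : realType.
Local Notation C := R[i].
Local Notation rc := (real_complex R).
Local Notation cv := (@coh_form_values R _ _).

Lemma conjM' (a b : C) : (a * b)^* = a^* * b^*.
Proof. case: a b => a1 a2 [b1 b2]; apply/eqP; rewrite eq_complex /=; apply/andP; split; apply/eqP; ring. Qed.

Lemma values_add (A1 A2 B1 B2 : finType) (r1 : op R (A1 * B1)%type) (r2 : op R (A2 * B2)%type) c1 c2 :
  cv r1 c1 -> cv r2 c2 -> cv (tens_regroup r1 r2) (c1 + c2).
Proof.
move/values_pd => [n1 [p1 [psi1 [[h10 [h11 [h1u h1d]]] ->]]]].
move/values_pd => [n2 [p2 [psi2 [[h20 [h21 [h2u h2d]]] ->]]]].
pose p (ij : ('I_n1 * 'I_n2)%type) := p1 ij.1 * p2 ij.2.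
pose psi (ij : ('I_n1 * 'I_n2)%type) (u : ((A1 * A2) * (B1 * B2))%type) :=
  psi1 ij.1 (u.1.1, u.2.1) * psi2 ij.2 (u.1.2, u.2.2).
have qvE i j : qv (psi (i, j)) = fun a => qv (psi1 i) a.1 * qv (psi2 j) a.2.
  apply: funext => -[a1 a2]; rewrite /qv /psi /= sum_pair /= mulr_suml.
  apply: eq_bigr => b1 _; rewrite mulr_sumr; apply: eq_bigr => b2 _.
  by rewrite nsqM.
have H : pdI (tens_regroup r1 r2) p psi.
  split; first by move=> ij; rewrite /p mulr_ge0.
  split.
    rewrite (sum_pair (fun ij : ('I_n1 * 'I_n2)%type => p1 ij.1 * p2 ij.2)) /=.
    by under eq_bigr => i _ do rewrite -mulr_sumr h21 mulr1.
  split.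
    move=> [i j]; apply/unitE; rewrite -qv_sum qvE.
    rewrite (sum_pair (fun a : (A1 * A2)%type => qv (psi1 i) a.1 * qv (psi2 j) a.2)) /=.
    under eq_bigr => a1 _ do rewrite -mulr_sumr qv_sum (proj1 (unitE _) (h2u j)) mulr1.
    by rewrite qv_sum; apply/unitE.
  move=> u v; rewrite /tens_regroup h1d h2d mulr_suml.
  rewrite (sum_pair (fun ij : ('I_n1 * 'I_n2)%type => rc (p ij) * proj_op (psi ij) u v)) /=.
  apply: eq_bigr => i _; rewrite mulr_sumr; apply: eq_bigr => j _.
  rewrite /p /proj_op /psi /= real_complexM !conjM'; ring.
have := pdI_values H; congr (cv _ _).
rewrite (sum_pair (fun ij : ('I_n1 * 'I_n2)%type => p ij * ent (qv (psi ij)))) /=.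
have entE i j : ent (qv (psi (i, j))) = ent (qv (psi1 i)) + ent (qv (psi2 j)).
  rewrite qvE ent_prod //.
  - by move=> x; apply: qv_ge0.
  - by move=> x; apply: qv_ge0.
  - by rewrite qv_sum; apply/unitE.
  - by rewrite qv_sum; apply/unitE.
under eq_bigr => i _ do under eq_bigr => j _ do rewrite entE /p /= mulrDr.
under eq_bigr => i _ do rewrite big_split /=.
rewrite big_split /=; congr (_ + _).
  apply: eq_bigr => i _; under eq_bigr => j _ do rewrite mulrAC.
  by rewrite -mulr_sumr h21 mulr1.
rewrite exchange_big /=; apply: eq_bigr => j _; under eq_bigr => i _ do rewrite -mulrA.
by rewrite -mulr_suml h11 mul1r.
Qed.
End W.

Section Z.
Variable R : realType.
Local Notation C := R[i].
Local Notation rc := (real_complex R).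
Local Notation cv := (@coh_form_values R _ _).
Variables A1 A2 B1 B2 : finType.
Local Notation U := ((A1 * A2) * (B1 * B2))%type.

Definition sl1 (psi : U -> C) (t2 : (A2 * B2)%type) : (A1 * B1)%type -> C :=
  fun t1 => psi ((t1.1, t2.1), (t1.2, t2.2)).
Definition sl2 (psi : U -> C) (t1 : (A1 * B1)%type) : (A2 * B2)%type -> C :=
  fun t2 => psi ((t1.1, t2.1), (t1.2, t2.2)).

Lemma chain (psi : U -> C) : unit_vector psi ->
  \sum_a g (qv psi a) <=
  \sum_t2 (\sum_a1 g (qv (sl1 psi t2) a1) - g (sn (sl1 psi t2))) +
  \sum_t1 (\sum_a2 g (qv (sl2 psi t1) a2) - g (sn (sl2 psi t1))).
Proof.
move/unitE => hu.
pose m1 (a1 : A1) := \sum_a2 qv psi (a1, a2).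
have I1 := @cond_ineq R _ _ (fun t2 a1 => qv (sl1 psi t2) a1) (fun t2 => sn (sl1 psi t2)) m1 1.
have I2 : \sum_a1 (\sum_b1 g (sn (sl2 psi (a1, b1))) + \sum_a2 g (qv psi (a1, a2))) <=
          \sum_a1 (\sum_b1 \sum_a2 g (qv (sl2 psi (a1, b1)) a2) + g (m1 a1)).
  apply: ler_sum => a1 _.
  apply: (@cond_ineq R _ _ (fun b1 a2 => qv (sl2 psi (a1, b1)) a2)).
  - by move=> b1 a2; apply: qv_ge0.
  - by move=> b1; rewrite qv_sum.
  - move=> a2; rewrite /qv sum_pair /=; apply: eq_bigr => b1 _; by [].
  - rewrite /m1 /sn; under [RHS]eq_bigr => b1 _ do rewrite -qv_sum.
    rewrite [RHS]exchange_big; apply: eq_bigr => a2 _; rewrite /qv sum_pair /=.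
    by [].
have {I1} I1 := I1 (fun _ _ => qv_ge0 _ _) (fun t2 => esym (qv_sum _)).
have I1' : \sum_t2 g (sn (sl1 psi t2)) + \sum_a1 g (m1 a1) <=
    \sum_t2 \sum_a1 g (qv (sl1 psi t2) a1) + g 1.
  apply: I1.
    move=> a1; rewrite /m1 (sum_pair (fun t2 : (A2 * B2)%type => qv (sl1 psi t2) a1)) /=.
    apply: eq_bigr => a2 _; rewrite /qv sum_pair /= exchange_big /=.
    by [].
  rewrite -hu sum_regroup exchange_big /=; apply: eq_bigr => t2 _.
  by rewrite /sn.
rewrite g1 addr0 in I1'.
rewrite !big_split /= in I2.
rewrite (sum_pair (fun a : (A1 * A2)%type => g (qv psi a))) /=.
rewrite (sum_pair (fun t1 : (A1 * B1)%type => \sum_a2 g (qv (sl2 psi t1) a2) - g (sn (sl2 psi t1)))) /=.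
under [X in _ <= _ + X]eq_bigr => a1 _ do rewrite sumrB.
rewrite !sumrB.
move: I1' I2; lra.
Qed.

Lemma trace_ne (T : finType) (r : op R T) : trace_op r = 1 -> exists e : T, True.
Proof.
move=> tr; case: (pickP (@predT T)) => [e _|none]; first by exists e.
move: tr; rewrite /trace_op big1 => [/eqP|x _]; first by rewrite eq_sym oner_eq0.
by have := none x.
Qed.

Lemma values_split (r1 : op R (A1 * B1)%type) (r2 : op R (A2 * B2)%type) c :
  is_state r1 -> is_state r2 -> cv (tens_regroup r1 r2) c ->
  exists c1 c2, cv r1 c1 /\ cv r2 c2 /\ c1 + c2 <= c.
Proof.
move=> [_ tr1] [_ tr2] /values_pd [n [p [psi [[p0 [p1 [pu pd]]] ->]]]].
have [e1 _] := trace_ne tr1; have [e2 _] := trace_ne tr2.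
have tr1' : \sum_t r1 t t = 1 := tr1.
have tr2' : \sum_t r2 t t = 1 := tr2.
have dec1 x y : r1 x y = \sum_i \sum_t2 rc (p i) * (sl1 (psi i) t2 x * (sl1 (psi i) t2 y)^*).
  rewrite exchange_big /=.
  transitivity (\sum_(t2 : (A2 * B2)%type) tens_regroup r1 r2 ((x.1, t2.1), (x.2, t2.2)) ((y.1, t2.1), (y.2, t2.2))).
    rewrite /tens_regroup /=; under eq_bigr => t2 _ do rewrite -!surjective_pairing.
    by rewrite -mulr_sumr tr2' mulr1.
  by apply: eq_bigr => t2 _; rewrite pd.
have dec2 x y : r2 x y = \sum_i \sum_t1 rc (p i) * (sl2 (psi i) t1 x * (sl2 (psi i) t1 y)^*).
  rewrite exchange_big /=.
  transitivity (\sum_(t1 : (A1 * B1)%type) tens_regroup r1 r2 ((t1.1, x.1), (t1.2, x.2)) ((t1.1, y.1), (t1.2, y.2))).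
    rewrite /tens_regroup /=; under eq_bigr => t1 _ do rewrite -!surjective_pairing.
    by rewrite -mulr_suml tr1' mul1r.
  by apply: eq_bigr => t1 _; rewrite pd.
have D1 := slice (Phi := fun i => sl1 (psi i)) e1 p0 tr1 dec1.
have D2 := slice (Phi := fun i => sl2 (psi i)) e2 p0 tr2 dec2.
eexists; eexists; split; first exact: D1.
split; first exact: D2.
rewrite -opprD -big_split /=.
have entE i : ent (qv (psi i)) = - \sum_a g (qv (psi i) a) by [].
under [X in _ <= X]eq_bigr => i _ do rewrite entE mulrN.
rewrite sumrN lerN2; apply: ler_sum => i _; rewrite -mulrDr; apply: ler_wpM2l => //.
exact: chain.
Qed.
End Z.

Unset Implicit Arguments.
Theorem proposition11 (R : realType) (A1 A2 B1 B2 : finType)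
    (r1 : op R (A1 * B1)%type) (r2 : op R (A2 * B2)%type) :
  is_state r1 -> is_state r2 ->
  coh_form (tens_regroup r1 r2) = coh_form r1 + coh_form r2.
Proof.
move=> s1 s2.
have ne (X Y : finType) (rho : op R (X * Y)%type) : is_state rho -> (coh_form_values rho !=set0)%classic.
  move/exists_decomp => [n [p [psi pd]]].
  by eexists; exists n, p, psi; split; first exact: pd.
have lb (X Y : finType) (rho : op R (X * Y)%type) : has_lbound (coh_form_values rho).
  by exists 0 => c /values_ge0.
have infle (X Y : finType) (rho : op R (X * Y)%type) c : coh_form_values rho c -> coh_form rho <= c.
  by move=> h; apply: (ge_inf (lb _ _ rho)).
have [c1 C1] := ne _ _ _ s1; have [c2 C2] := ne _ _ _ s2.
apply/eqP; rewrite eq_le; apply/andP; split.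
  have h1 d2 : coh_form_values r2 d2 -> coh_form (tens_regroup r1 r2) - d2 <= coh_form r1.
    move=> D2; apply: lb_le_inf; first by exists c1.
    move=> d1 D1; have := infle _ _ _ _ (values_add D1 D2); lra.
  have h2 : coh_form (tens_regroup r1 r2) - coh_form r1 <= coh_form r2.
    apply: lb_le_inf; first by exists c2.
    move=> d2 D2; have := h1 d2 D2; lra.
  lra.
apply: lb_le_inf; first by exists (c1 + c2); apply: values_add.
move=> c /(values_split s1 s2) [d1 [d2 [D1 [D2 le]]]].
apply: le_trans le; apply: lerD; exact: infle.
Qed.
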